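(* Let $\alpha>0$, $\eta=\alpha/(L+\alpha)$, and consider AggGCG (primal) from $y_0\in\mathrm{dom}\, h$, $s_0\in\mathbb{R}^n$: for $k\ge0$, $x_{k+1}=\mathrm{argmin}_x\{\langle s_k,x\rangle+h^\alpha(x)\}$, $y_{k+1}=(1-\eta)y_k+\eta x_{k+1}$, $s_{k+1}=(1-\eta)s_k+\eta\nabla f(y_k)$. Then for all $k\ge0$: (a) $f(y_{k+1})\le(1-\eta)f(y_k)-\eta f^*(\nabla f(y_k))+\eta\langle\nabla f(y_k),x_{k+1}\rangle+\frac{L\eta^2}{2}\|x_{k+1}-y_k\|^2$; (b) $(h^\alpha)^*(-s_{k+1})\le(1-\eta)(h^\alpha)^*(-s_k)-\eta h^\alpha(x_{k+1})-\eta\langle x_{k+1},\nabla f(y_k)\rangle+\frac{\eta^2}{2\alpha}\|\nabla f(y_k)-s_k\|_*^2$; (c) $h^\alpha(y_{k+1})\le\eta h^\alpha(x_{k+1})+(1-\eta)h^\alpha(y_k)-\frac{\alpha\eta(1-\eta)}{2}\|x_{k+1}-y_k\|^2$; (d) $f^*(s_{k+1})\le\eta f^*(\nabla f(y_k))+(1-\eta)f^*(s_k)-\frac{\eta(1-\eta)}{2L}\|\nabla f(y_k)-s_k\|_*^2$.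
   Context: Let $\|\cdot\|$ be a norm on $\mathbb{R}^n$ with dual norm $\|\cdot\|_*$. Let $f:\mathbb{R}^n\to\mathbb{R}$ be convex, differentiable and $L$-smooth ($L>0$) with respect to $\|\cdot\|$, $h:\mathbb{R}^n\to(-\infty,\infty]$ closed proper convex with bounded domain, and $w:\mathbb{R}^n\to[0,+\infty]$ closed, $1$-strongly convex with respect to $\|\cdot\|$ on $\mathrm{dom}\, h$, with $\max_{\mathrm{dom}\, h}w<\infty$. Let $h^\alpha=h+\alpha w$; $^*$ denotes convex conjugate. *)

(* Defs.v *)
From HB Require Import structures.
From mathcomp Require Import all_boot all_order all_algebra.
From mathcomp Require Import all_classical all_reals all_analysis.
Set Implicit Arguments. Unset Strict Implicit. Unset Printing Implicit Defensive.
Import Order.TTheory GRing.Theory Num.Theory.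
Import numFieldNormedType.Exports.
Local Open Scope classical_set_scope.
Local Open Scope ring_scope.

Definition dotp (R : realType) (n : nat) (u v : 'rV[R]_n) : R :=
  \sum_(i < n) u 0 i * v 0 i.

Definition is_norm (R : realType) (n : nat) (nrm : 'rV[R]_n -> R) : Prop :=
  [/\ forall x, nrm x = 0 -> x = 0,
      forall (a : R) x, nrm (a *: x) = `|a| * nrm x
    & forall x y, nrm (x + y) <= nrm x + nrm y].

Definition dual_norm (R : realType) (n : nat) (nrm : 'rV[R]_n -> R)
  (g : 'rV[R]_n) : R :=
  sup [set dotp g x | x in [set x | nrm x <= 1]].

Definition conj_ext (R : realType) (n : nat) (F : 'rV[R]_n -> \bar R)
  (s : 'rV[R]_n) : \bar R :=
  ereal_sup [set ((dotp s x)%:E - F x)%E | x in [set: 'rV[R]_n]].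

Definition conj_fun (R : realType) (n : nat) (f : 'rV[R]_n -> R) :
  'rV[R]_n -> \bar R := conj_ext (fun x => (f x)%:E).

Definition edom (R : realType) (n : nat) (F : 'rV[R]_n -> \bar R) :
  set 'rV[R]_n := [set x | (F x < +oo)%E].

Definition convex_fun (R : realType) (n : nat) (f : 'rV[R]_n -> R) : Prop :=
  forall (x y : 'rV[R]_n) (t : R), 0 <= t <= 1 ->
    f (t *: x + (1 - t) *: y) <= t * f x + (1 - t) * f y.

Definition convex_ext (R : realType) (n : nat) (F : 'rV[R]_n -> \bar R) : Prop :=
  forall (x y : 'rV[R]_n) (t : R), 0 <= t <= 1 ->
    (F (t *: x + (1 - t) *: y)%R <= t%:E * F x + (1 - t)%:E * F y)%E.

Definition proper_ext (R : realType) (n : nat) (F : 'rV[R]_n -> \bar R) : Prop :=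
  (forall x, F x != -oo%E) /\ exists x, (F x < +oo)%E.

(* closed = lower semicontinuous = all sublevel sets closed *)
Definition closed_ext (R : realType) (n : nat) (F : 'rV[R]_n -> \bar R) : Prop :=
  forall t : R, closed [set x | (F x <= t%:E)%E].

Definition strongly_convex_on (R : realType) (n : nat) (nrm : 'rV[R]_n -> R)
  (mu : R) (D : set 'rV[R]_n) (F : 'rV[R]_n -> \bar R) : Prop :=
  forall (x y : 'rV[R]_n) (t : R), D x -> D y -> 0 <= t <= 1 ->
    (F (t *: x + (1 - t) *: y)%R <= t%:E * F x + (1 - t)%:E * F y
       - (mu * t * (1 - t) / 2 * nrm (x - y) ^+ 2)%:E)%E.

Definition halpha (R : realType) (n : nat) (h w : 'rV[R]_n -> \bar R) (alpha : R) :
  'rV[R]_n -> \bar R := fun x => (h x + alpha%:E * w x)%E.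

(* Main.v *)
Require Import Defs.
From HB Require Import structures.
From mathcomp Require Import all_boot all_order all_algebra.
From mathcomp Require Import all_classical all_reals all_analysis.
From mathcomp Require Import ring lra.
Import Order.TTheory GRing.Theory Num.Theory.
Import numFieldNormedType.Exports.
Local Open Scope classical_set_scope.
Local Open Scope ring_scope.
Set Implicit Arguments.
Unset Strict Implicit.
Unset Printing Implicit Defensive.

Section Dot.
Context (R : realType) (n : nat).

Lemma dotpDl (u v z : 'rV[R]_n) : dotp (u + v) z = dotp u z + dotp v z.
Proof. by rewrite /dotp -big_split /=; apply: eq_bigr => i _; rewrite mxE mulrDl. Qed.
Lemma dotpZl (a : R) (u z : 'rV[R]_n) : dotp (a *: u) z = a * dotp u z.
Proof. by rewrite /dotp mulr_sumr; apply: eq_bigr => i _; rewrite mxE mulrA. Qed.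
Lemma dotpC (u z : 'rV[R]_n) : dotp u z = dotp z u.
Proof. by rewrite /dotp; apply: eq_bigr => i _; rewrite mulrC. Qed.
Lemma dotpDr (u v z : 'rV[R]_n) : dotp z (u + v) = dotp z u + dotp z v.
Proof. by rewrite !(dotpC z) dotpDl. Qed.
Lemma dotpZr (a : R) (u z : 'rV[R]_n) : dotp z (a *: u) = a * dotp z u.
Proof. by rewrite !(dotpC z) dotpZl. Qed.
Lemma dotpNl (u z : 'rV[R]_n) : dotp (- u) z = - dotp u z.
Proof. by rewrite -scaleN1r dotpZl mulN1r. Qed.
Lemma dotpNr (u z : 'rV[R]_n) : dotp z (- u) = - dotp z u.
Proof. by rewrite -scaleN1r dotpZr mulN1r. Qed.
Lemma dotpBl (u v z : 'rV[R]_n) : dotp (u - v) z = dotp u z - dotp v z.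
Proof. by rewrite dotpDl dotpNl. Qed.
Lemma dotpBr (u v z : 'rV[R]_n) : dotp z (u - v) = dotp z u - dotp z v.
Proof. by rewrite dotpDr dotpNr. Qed.
Lemma dotp0r (z : 'rV[R]_n) : dotp z 0 = 0.
Proof. by rewrite -(scale0r (0 : 'rV[R]_n)) dotpZr mul0r. Qed.
Lemma dotp0l (z : 'rV[R]_n) : dotp 0 z = 0.
Proof. by rewrite dotpC dotp0r. Qed.
End Dot.

Section Nrm.
Context (R : realType) (n : nat) (nrm : 'rV[R]_n -> R) (Hn : is_norm nrm).

Lemma nrmZ a x : nrm (a *: x) = `|a| * nrm x.
Proof. by case: Hn. Qed.
Lemma nrm_tri x y : nrm (x + y) <= nrm x + nrm y.
Proof. by case: Hn. Qed.
Lemma nrm_eq0 x : nrm x = 0 -> x = 0.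
Proof. by case: Hn => h _ _; apply: h. Qed.
Lemma nrm0 : nrm 0 = 0.
Proof. by rewrite -(scale0r (0 : 'rV[R]_n)) nrmZ normr0 mul0r. Qed.
Lemma nrmN x : nrm (- x) = nrm x.
Proof. by rewrite -scaleN1r nrmZ normrN normr1 mul1r. Qed.
Lemma nrm_ge0 x : 0 <= nrm x.
Proof.
have := nrm_tri x (- x); rewrite subrr nrm0 nrmN => h; lra.
Qed.
Lemma nrm_gt0 x : x != 0 -> 0 < nrm x.
Proof.
move=> x0; rewrite lt_neqAle nrm_ge0 andbT eq_sym; apply/eqP => /nrm_eq0 h.
by rewrite h eqxx in x0.
Qed.

Lemma nrm_sum (I : Type) (r : seq I) (F : I -> 'rV[R]_n) :
  nrm (\sum_(i <- r) F i) <= \sum_(i <- r) nrm (F i).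
Proof.
elim/big_rec2: _ => [|i y1 y2 _ h]; first by rewrite nrm0.
by apply: le_trans (nrm_tri _ _) _; rewrite lerD2l.
Qed.

Lemma coord_le (x : 'rV[R]_n) i : `|x 0 i| <= `|x|.
Proof.
have -> : `|x| = mx_norm x by []. rewrite mx_normrE.
apply: le_trans (le_bigmax _ _ (ord0, i)) => /=.
by rewrite ord1.
Qed.

Definition Cn := \sum_(i < n) nrm (delta_mx 0 i).

Lemma nrm_le_mx x : nrm x <= Cn * `|x|.
Proof.
rewrite {1}(row_sum_delta x) /Cn mulr_suml.
apply: le_trans (nrm_sum _ _) _; apply: ler_sum => i _.
by rewrite nrmZ mulrC ler_wpM2l ?nrm_ge0 ?coord_le.
Qed.

Lemma nrm_continuous : continuous nrm.
Proof.
move=> x; apply/(@cvgrPdist_lt _ _ _ (nbhs x) (nbhs_filter x)) => e e0.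
have C0 : 0 < Cn + 1 by rewrite ltr_pwDr // /Cn sumr_ge0 // => i _; exact: nrm_ge0.
apply/nbhs_ballP; exists (e / (Cn + 1)); first by apply: divr_gt0.
move=> y; rewrite -ball_normE /= => hy.
have h1 : nrm x <= nrm (x - y) + nrm y by rewrite -{1}(subrK y x) nrm_tri.
have h2 : nrm y <= nrm (y - x) + nrm x by rewrite -{1}(subrK x y) nrm_tri.
have h3 : nrm (x - y) <= Cn * `|x - y| by exact: nrm_le_mx.
have h4 : nrm (y - x) = nrm (x - y) by rewrite -opprB nrmN.
have h5 : Cn * `|x - y| < e.
  apply: le_lt_trans (_ : (Cn + 1) * `|x - y| < e).
    by rewrite ler_wpM2r // lerDl.
  by rewrite mulrC -ltr_pdivlMr.
rewrite ltr_norml; apply/andP; split; lra.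
Qed.

Lemma nrm_equiv : exists2 c : R, 0 < c & forall x, `|x| <= c * nrm x.
Proof.
have [[x0 x00]|] := pselect (exists x : 'rV[R]_n, x != 0); last first.
  move=> nx; exists 1 => // x; have -> : x = 0.
    by apply: contra_notP nx => /eqP h; exists x.
  by rewrite normr0 nrm0 mulr0.
pose S := [set x : 'rV[R]_n | `|x| = 1].
have S0 : S !=set0.
  exists (`|x0|^-1 *: x0); rewrite /S /= normrZ normrV ?unitfE ?normr_eq0 //.
  by rewrite normr_id mulVf // normr_eq0.
have Sc : compact S.
  apply: bounded_closed_compact.
    exists 1; split => // M M1 x /= ->; exact: ltW.
  exact: ((continuous_closedP (Num.norm : 'rV[R]_n -> R)).1 (@norm_continuous R 'rV[R]_n) _ (@closed_eq R 1)).
have [c cS cmin] := EVT_min_rV S0 Sc (continuous_subspaceT nrm_continuous).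
have c1 : `|c| = 1 by move: cS; rewrite inE.
have c0n : c != 0 by apply/eqP => h; move: c1; rewrite h normr0 => /eqP; rewrite eq_sym oner_eq0.
have m0 := @nrm_gt0 c c0n.
exists (nrm c)^-1; first by rewrite invr_gt0.
move=> x; have [->|x0n] := eqVneq x 0; first by rewrite normr0 nrm0 mulr0.
have xp : 0 < `|x| by rewrite normr_gt0.
have := cmin (`|x|^-1 *: x); rewrite inE /S /= normrZ normrV ?unitfE ?normr_eq0 //.
rewrite normr_id mulVf ?normr_eq0 // => /(_ erefl).
rewrite nrmZ normrV ?unitfE ?normr_eq0 // normr_id => h.
rewrite -ler_pdivrMl ?invr_gt0 // invrK.
by rewrite -ler_pdivlMr // mulrC.
Qed.

Definition dn := dual_norm nrm.
Definition uset g := [set dotp g x | x in [set x | nrm x <= 1]].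

Lemma dotp_le_mx (g x : 'rV[R]_n) : dotp g x <= (\sum_(i < n) `|g 0 i|) * `|x|.
Proof.
rewrite /dotp mulr_suml; apply: ler_sum => i _.
apply: le_trans (ler_norm _) _; rewrite normrM ler_wpM2l //; exact: coord_le.
Qed.

Lemma uset_ub g : has_ubound (uset g).
Proof.
have [c c0 hc] := nrm_equiv.
exists ((\sum_(i < n) `|g 0 i|) * c) => _ [x /= hx <-].
apply: le_trans (dotp_le_mx g x) _; rewrite ler_wpM2l ?sumr_ge0 //.
by apply: le_trans (hc x) _; rewrite ler_piMr // ltW.
Qed.

Lemma uset_n0 g : uset g !=set0.
Proof. by exists (dotp g 0), 0 => //=; rewrite nrm0. Qed.

Lemma dn_ub g x : nrm x <= 1 -> dotp g x <= dn g.
Proof. by move=> hx; apply: ub_le_sup (uset_ub g) _ _; exists x. Qed.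

Lemma dn_ge0 g : 0 <= dn g.
Proof. by rewrite -(dotp0r g); apply: dn_ub; rewrite nrm0. Qed.

Lemma dn_le g M : (forall x, nrm x <= 1 -> dotp g x <= M) -> dn g <= M.
Proof. by move=> h; apply: ge_sup (uset_n0 g) _ => _ [x /= hx <-]; apply: h. Qed.

Lemma dotp_le g x : dotp g x <= dn g * nrm x.
Proof.
have [->|x0] := eqVneq x 0; first by rewrite dotp0r nrm0 mulr0.
have p := @nrm_gt0 x x0.
have := @dn_ub g ((nrm x)^-1 *: x).
rewrite nrmZ ger0_norm ?invr_ge0 ?nrm_ge0 // mulVf ?gt_eqF // lexx dotpZr => /(_ isT).
move=> h; rewrite (_ : dotp g x = nrm x * ((nrm x)^-1 * dotp g x)).
  by rewrite [dn g * _]mulrC ler_wpM2l // ltW.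
by rewrite mulrA mulfV ?gt_eqF // mul1r.
Qed.

Lemma dotp_abs_le g x : `|dotp g x| <= dn g * nrm x.
Proof.
rewrite ler_norml dotp_le andbT lerNl -dotpNr -(nrmN x); exact: dotp_le.
Qed.

Lemma dnN g : dn (- g) = dn g.
Proof.
suff h : forall g, dn (- g) <= dn g by apply/eqP; rewrite eq_le h /= -{1}(opprK g) h.
move=> u; apply: dn_le => x hx; rewrite dotpNl -dotpNr.
by apply: dn_ub; rewrite nrmN.
Qed.

Lemma dnD g1 g2 : dn (g1 + g2) <= dn g1 + dn g2.
Proof.
apply: dn_le => x hx; rewrite dotpDl; apply: lerD; exact: dn_ub.
Qed.
End Nrm.

Section Smooth.
Context (R : realType) (n : nat) (nrm : 'rV[R]_n -> R) (Hn : is_norm nrm)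
  (f : 'rV[R]_n -> R) (gradf : 'rV[R]_n -> 'rV[R]_n)
  (Hd : forall z, differentiable f z /\ forall v, 'd f z v = dotp (gradf z) v).

Lemma line_quot (y d : 'rV[R]_n) (t : R) :
  (fun h : R => h^-1 *: (((fun s : R => f (y + s *: d)) \o shift t) (h *: 1)
     - f (y + t *: d)))
  = (fun h : R => h^-1 *: ((f \o shift (y + t *: d)) (h *: d) - f (y + t *: d))).
Proof.
apply: funext => h /=; congr (_ *: (f _ - _)).
by rewrite [_%:A]mulr1 scalerDl addrCA.
Qed.

Lemma line_derive (y d : 'rV[R]_n) (t : R) :
  is_derive t 1 (fun s : R => f (y + s *: d)) (dotp (gradf (y + t *: d)) d).
Proof.
have [df dg] := Hd (y + t *: d).
apply: DeriveDef.
  by rewrite /derivable line_quot; exact: diff_derivable.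
by rewrite /derive line_quot -/(derive f _ d) deriveE.
Qed.
End Smooth.

Section Descent.
Context (R : realType) (n : nat) (nrm : 'rV[R]_n -> R) (Hn : is_norm nrm)
  (f : 'rV[R]_n -> R) (gradf : 'rV[R]_n -> 'rV[R]_n) (L : R)
  (Hd : forall z, differentiable f z /\ forall v, 'd f z v = dotp (gradf z) v)
  (HL : forall u v, dual_norm nrm (gradf u - gradf v) <= L * nrm (u - v)).

Lemma descent (y d : 'rV[R]_n) :
  f (y + d) <= f y + dotp (gradf y) d + L / 2 * nrm d ^+ 2.
Proof.
set a := dotp (gradf y) d; set b := L / 2 * nrm d ^+ 2.
pose phi := fun s : R => f (y + s *: d).
pose P : R -> R := a \*: (@id R) + b \*: ((@id R) ^+ 2).
have hder : forall c : R, is_derive c (1:R) (phi - P)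
    (dotp (gradf (y + c *: d)) d - (a *: 1 + b *: ((2%:R * c ^+ 1) *: 1))).
  move=> c; apply: is_deriveB; first exact: line_derive.
have cont : {within `[0, 1], continuous (phi - P)}.
  apply: derivable_within_continuous => x _; exact: ex_derive.
have [c cin] := MVT ltr01 (fun x _ => hder x) cont.
move=> h0.
have h : (f (y + 1 *: d) - (a * 1 + b * (1 * 1))) - (f (y + 0 *: d) - (a * 0 + b * (0 * 0)))
  = (dotp (gradf (y + c *: d)) d - (a * 1 + b * (2 * c * 1))) * (1 - 0) := h0.
move: h; rewrite scale1r scale0r addr0 !mul0r !mulr0 !mulr1 addr0 subr0 => h.
have c0 : 0 <= c by move: cin; rewrite in_itv /= => /andP[/ltW].
have key : dotp (gradf (y + c *: d) - gradf y) d <= b * (2 * c).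
  apply: le_trans (dotp_le Hn _ _) _.
  have := HL (y + c *: d) y; rewrite -/(dn nrm _).
  have -> : y + c *: d - y = c *: d by rewrite addrC addKr.
  rewrite nrmZ // ger0_norm // => hl.
  have : dn nrm (gradf (y + c *: d) - gradf y) * nrm d <= L * (c * nrm d) * nrm d.
    by rewrite ler_wpM2r // (nrm_ge0 Hn).
  rewrite /b; move=> hh; apply: le_trans hh _.
  rewrite le_eqVlt; apply/orP; left; apply/eqP; rewrite expr2; by field.
move: key; rewrite dotpBl -/a => key.
move: h; rewrite subr0 mulr1 => h.
lra.
Qed.
End Descent.

Section GradIneq.
Context (R : realType) (n : nat)
  (f : 'rV[R]_n -> R) (gradf : 'rV[R]_n -> 'rV[R]_n)
  (Hc : convex_fun f)
  (Hd : forall z, differentiable f z /\ forall v, 'd f z v = dotp (gradf z) v).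

Lemma grad_ineq (y u : 'rV[R]_n) : f y + dotp (gradf y) (u - y) <= f u.
Proof.
set d := u - y; set D := dotp (gradf y) d.
pose phi := fun s : R => f (y + s *: d).
have hd := line_derive Hd y d 0.
rewrite scale0r addr0 -/D in hd.
pose q := fun h : R => h^-1 *: ((phi \o shift 0) (h *: 1) - phi 0).
have hq : q @ 0^' --> D.
  have := @ex_derive _ _ _ _ _ _ _ hd; rewrite /derivable -/q.
  by have := @derive_val _ _ _ _ _ _ _ hd; rewrite /derive -/q => ->.
have hq' : q @ at_right 0 --> D.
  apply: cvg_trans hq => A /= [e e0 hA]; exists e => //= z hz /gt_eqF/negbT z0.
  exact: hA.
suff : D <= f u - f y by rewrite -/d -/D; lra.
apply: (cvgr_to_le hq').
near=> h.
have h0 : 0 < h by near: h; exact: nbhs_right_gt.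
have h1 : h <= 1 by near: h; exact: nbhs_right_le.
have hh : 0 <= h <= 1 by rewrite (ltW h0) h1.
have hc := Hc u y hh.
have e : h *: u + (1 - h) *: y = y + h *: d.
  by rewrite /d scalerBr scalerBl scale1r addrCA.
rewrite e in hc.
rewrite /q /phi /= [_%:A]mulr1 addr0 scale0r addr0.
rewrite /GRing.scale /=.
rewrite -(ler_pM2l h0) mulrA mulfV ?gt_eqF // mul1r.
move: hc; rewrite -/(phi h). nra.
Unshelve. all: by end_near.
Qed.
End GradIneq.

Section ConjLower.
Context (R : realType) (n : nat) (nrm : 'rV[R]_n -> R) (Hn : is_norm nrm)
  (f : 'rV[R]_n -> R) (gradf : 'rV[R]_n -> 'rV[R]_n) (L : R) (L0 : 0 < L)
  (Hd : forall z, differentiable f z /\ forall v, 'd f z v = dotp (gradf z) v)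
  (HL : forall u v, dual_norm nrm (gradf u - gradf v) <= L * nrm (u - v)).

Lemma conj_lower (v z : 'rV[R]_n) (B : R) :
  (forall u, dotp v u - f u <= B) ->
  dotp v z - f z + dn nrm (v - gradf z) ^+ 2 / (2 * L) <= B.
Proof.
move=> hB.
set a := dn nrm (v - gradf z).
set K := B - (dotp v z - f z).
have K0 : 0 <= K by rewrite subr_ge0; exact: hB.
suff : a ^+ 2 / (2 * L) <= K by rewrite /K; lra.
have a0 : 0 <= a := dn_ge0 Hn _.
have [a00|ap] := eqVneq a 0.
  by rewrite a00 expr0n /= mul0r.
have apos : 0 < a by rewrite lt_neqAle eq_sym ap a0.
set t := a / L.
have tpos : 0 < t by rewrite divr_gt0.
have step1 : forall x, nrm x <= 1 -> t * dotp (v - gradf z) x <= K + a ^+ 2 / (2 * L).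
  move=> x hx.
  have h1 := hB (z + t *: x).
  have h2 := descent Hn Hd HL z (t *: x).
  move: h1 h2; rewrite dotpDr !dotpZr (nrmZ Hn) gtr0_norm // dotpBl.
  have nx0 := nrm_ge0 Hn x.
  have nx2 : nrm x ^+ 2 <= 1 by rewrite expr_le1.
  have e : L / 2 * (t * nrm x) ^+ 2 <= a ^+ 2 / (2 * L).
    rewrite exprMn mulrA.
    have -> : a ^+ 2 / (2 * L) = L / 2 * t ^+ 2 * 1.
      by rewrite /t; field; rewrite gt_eqF.
    apply: ler_wpM2l => //.
    by rewrite mulr_ge0 ?sqr_ge0 // divr_ge0 // ltW.
  rewrite /K; lra.
have step2 : a <= (K + a ^+ 2 / (2 * L)) / t.
  apply: (dn_le Hn) => xx hxx; rewrite ler_pdivlMr // mulrC; exact: step1.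
move: step2; rewrite ler_pdivlMr // /t.
have -> : a * (a / L) = 2 * (a ^+ 2 / (2 * L)) by field; rewrite gt_eqF.
lra.
Qed.
End ConjLower.

Lemma lim_aux (R : realType) (a b e : R) :
  0 <= b -> (forall t, 0 < t -> t < 1 -> a - t * b <= e) -> a <= e.
Proof.
move=> b0 H; rewrite leNgt; apply/negP => ea.
set d := a - e.
have d0 : 0 < d by rewrite subr_gt0.
set t := d / (2 * (b + d)).
have bd : 0 < b + d by lra.
have t0 : 0 < t by rewrite divr_gt0 // mulr_gt0.
have te : t * (2 * (b + d)) = d by rewrite /t mulfVK // gt_eqF // mulr_gt0.
have t1 : t < 1.
  rewrite /t ltr_pdivrMr ?mulr_gt0 //; lra.
have hh := H t t0 t1.
have ed : d = a - e by [].
have td : 0 < t * d by rewrite mulr_gt0.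

have tb : 0 <= t * b by rewrite mulr_ge0 // ltW.

lra.
Qed.
Unset Implicit Arguments.
Set Strict Implicit.

Theorem lemmaC1 (R : realType) (n : nat) (nrm : 'rV[R]_n -> R)
  (f : 'rV[R]_n -> R) (gradf : 'rV[R]_n -> 'rV[R]_n) (L : R)
  (h w : 'rV[R]_n -> \bar R) (alpha : R)
  (x y s : nat -> 'rV[R]_n) :
  is_norm nrm ->
  (* f convex, differentiable with gradient gradf, L-smooth *)
  convex_fun f ->
  (forall z, differentiable f z /\ forall v, 'd f z v = dotp (gradf z) v) ->
  0 < L ->
  (forall u v, dual_norm nrm (gradf u - gradf v) <= L * nrm (u - v)) ->
  (* h closed proper convex with bounded domain *)
  closed_ext h -> proper_ext h -> convex_ext h ->
  (exists M : R, forall z, edom h z -> nrm z <= M) ->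
  (* w : R^n -> [0,+oo], closed, 1-strongly convex on dom h, bounded on dom h *)
  (forall z, (0 <= w z)%E) -> closed_ext w ->
  strongly_convex_on nrm 1 (edom h) w ->
  (exists M : R, forall z, edom h z -> (w z <= M%:E)%E) ->
  0 < alpha ->
  let eta := alpha / (L + alpha) in
  let ha := halpha h w alpha in
  (* AggGCG *)
  edom h (y 0%N) ->
  (forall k : nat, forall z,
      ((dotp (s k) (x k.+1))%:E + ha (x k.+1) <= (dotp (s k) z)%:E + ha z)%E) ->
  (forall k : nat, y k.+1 = (1 - eta) *: y k + eta *: x k.+1) ->
  (forall k : nat, s k.+1 = (1 - eta) *: s k + eta *: gradf (y k)) ->
  forall k : nat,
  [/\ ((f (y k.+1))%:E <= (1 - eta)%:E * (f (y k))%:E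
          - eta%:E * conj_fun f (gradf (y k))
          + (eta * dotp (gradf (y k)) (x k.+1)
             + L * eta ^+ 2 / 2 * nrm (x k.+1 - y k) ^+ 2)%:E)%E,
      (conj_ext ha (- s k.+1) <= (1 - eta)%:E * conj_ext ha (- s k)
          - eta%:E * ha (x k.+1)
          - (eta * dotp (x k.+1) (gradf (y k)))%:E
          + (eta ^+ 2 / (2 * alpha)
             * dual_norm nrm (gradf (y k) - s k) ^+ 2)%:E)%E,
      (ha (y k.+1) <= eta%:E * ha (x k.+1) + (1 - eta)%:E * ha (y k)
          - (alpha * eta * (1 - eta) / 2 * nrm (x k.+1 - y k) ^+ 2)%:E)%E
    & (conj_fun f (s k.+1) <= eta%:E * conj_fun f (gradf (y k))
          + (1 - eta)%:E * conj_fun f (s k)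
          - (eta * (1 - eta) / (2 * L)
             * dual_norm nrm (gradf (y k) - s k) ^+ 2)%:E)%E].
Proof.
move=> Hn Hc Hd L0 HL _ [hNy _] hconv _ w0 _ wsc [Mw hMw] a0 eta ha y0D hopt hy hs k.
have eta0 : 0 < eta by rewrite divr_gt0 // addr_gt0.
have eta1 : eta < 1 by rewrite /eta ltr_pdivrMr ?addr_gt0 // mul1r ltrDr.
have eta01 : 0 <= eta <= 1 by rewrite (ltW eta0) (ltW eta1).
pose hr := fun z => fine (h z).
pose wr := fun z => fine (w z).
pose har := fun z => hr z + alpha * wr z.
have hE : forall z, edom h z -> h z = (hr z)%:E.
  by move=> z hz; rewrite /hr fineK // fin_numE (hNy z) /= (lt_eqF hz).
have wE : forall z, edom h z -> w z = (wr z)%:E.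
  move=> z hz; rewrite /wr fineK // ge0_fin_numE //.
  exact: le_lt_trans (hMw z hz) (ltry _).
have haE : forall z, edom h z -> ha z = (har z)%:E.
  by move=> z hz; rewrite /ha /halpha hE // wE // /har EFinD EFinM.
have haNd : forall z, ~ edom h z -> ha z = +oo%E.
  move=> z hz; have hzi : h z = +oo%E.
    by apply/eqP; rewrite eq_le leey /= leNgt; apply/negP.
  rewrite /ha /halpha hzi addye //.
  by rewrite gt_eqF // (lt_le_trans (ltNyr 0)) // mule_ge0 // lee_fin ltW.
have wr0 : forall z, edom h z -> 0 <= wr z.
  by move=> z hz; have := w0 z; rewrite wE // lee_fin.
have SC : forall z1 z2 t, edom h z1 -> edom h z2 -> 0 <= t <= 1 ->
    edom h (t *: z1 + (1 - t) *: z2) /\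
    har (t *: z1 + (1 - t) *: z2) <= t * har z1 + (1 - t) * har z2
       - alpha * t * (1 - t) / 2 * nrm (z1 - z2) ^+ 2.
  move=> z1 z2 t d1 d2 ht.
  have c1 := hconv z1 z2 t ht.
  rewrite (hE _ d1) (hE _ d2) -!EFinM -EFinD in c1.
  have dp : edom h (t *: z1 + (1 - t) *: z2) := le_lt_trans c1 (ltry _).
  split => //.
  have c2 := wsc z1 z2 t d1 d2 ht.
  rewrite (wE _ d1) (wE _ d2) (wE _ dp) -!EFinM -EFinD -?EFinD -?EFinB lee_fin in c2.
  rewrite (hE _ dp) lee_fin in c1.
  have c3 := ler_wpM2l (ltW a0) c2.
  rewrite /har; lra.
have Dx : forall j, edom h (x j.+1).
  move=> j; apply: contrapT => nd.
  have := hopt j (y 0%N); rewrite (haE _ y0D) (haNd _ nd) addey //.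
have Dy : forall j, edom h (y j).
  elim => // j IH; rewrite hy addrC; exact: (SC _ _ eta (Dx j) IH eta01).1.
have Opt : forall j z, edom h z ->
    dotp (s j) (x j.+1) + har (x j.+1) <= dotp (s j) z + har z.
  by move=> j z dz; have := hopt j z; rewrite haE // haE // -!EFinD lee_fin.
have SM : forall j z, edom h z ->
    dotp (s j) (x j.+1) + har (x j.+1) + alpha / 2 * nrm (z - x j.+1) ^+ 2
      <= dotp (s j) z + har z.
  move=> j z dz.
  apply: (@lim_aux _ _ (alpha / 2 * nrm (z - x j.+1) ^+ 2)).
    by rewrite mulr_ge0 ?sqr_ge0 // divr_ge0 // ltW.
  move=> t t0 t1.
  have ht : 0 <= t <= 1 by rewrite (ltW t0) (ltW t1).
  have [dp hp] := SC z (x j.+1) t dz (Dx j) ht.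
  have ho := Opt j _ dp.
  rewrite dotpDr !dotpZr in ho.
  have : t * (dotp (s j) (x j.+1) + har (x j.+1) + alpha / 2 * nrm (z - x j.+1) ^+ 2
     - t * (alpha / 2 * nrm (z - x j.+1) ^+ 2) - (dotp (s j) z + har z)) <= 0.
    lra.
  rewrite pmulr_rle0 //; lra.
set X := x k.+1; set Y := y k; set S := s k; set g := gradf Y.
have DX : edom h X := Dx k.
have DY : edom h Y := Dy k.
rewrite hy hs -/X -/Y -/S -/g.
have yE : (1 - eta) *: Y + eta *: X = Y + eta *: (X - Y).
  by rewrite scalerBr scalerBl scale1r addrAC -addrA.
set Fg := dotp g Y - f Y.
have cg : conj_fun f g = Fg%:E.
  apply/eqP; rewrite eq_le; apply/andP; split.
    apply: ge_ereal_sup => _ [u _ <-]; rewrite -EFinB lee_fin.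
    have := grad_ineq Hc Hd Y u; rewrite dotpBr /Fg; lra.
  by apply: ereal_sup_ubound; exists Y.
have hg : forall u, dotp g u - f u <= Fg.
  move=> u; rewrite -lee_fin EFinB -cg; apply: ereal_sup_ubound; by exists u.
have cS : conj_ext ha (- S) = (dotp (- S) X - har X)%:E.
  apply/eqP; rewrite eq_le; apply/andP; split.
    apply: ge_ereal_sup => _ [z _ <-].
    case: (pselect (edom h z)) => dz.
      rewrite haE // -EFinB lee_fin !dotpNl; have := Opt k z dz; rewrite -/X -/S; lra.
    by rewrite haNd // ?addeNy ?leNye.
  by apply: ereal_sup_ubound; exists X => //; rewrite haE.
split.
{
  rewrite yE cg -!EFinM -EFinB -EFinD lee_fin.
  have hd := descent Hn Hd HL Y (eta *: (X - Y)).
  rewrite dotpZr dotpBr (nrmZ Hn) gtr0_norm // exprMn in hd.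
  rewrite /Fg; lra.
}
{
  rewrite cS haE // -?EFinM -?EFinB -?EFinD -?EFinB -?EFinD -?EFinB.
  apply: ge_ereal_sup => _ [z _ <-].
  case: (pselect (edom h z)) => dz; last by rewrite haNd // ?addeNy ?leNye.
  rewrite haE // -EFinB lee_fin.
  have sm := SM k z dz; rewrite -/X -/S in sm.
  have hD := dotp_le Hn (S - g) (z - X).
  rewrite -opprB (dnN Hn) in hD.
  set D := dn nrm (g - S) in hD.
  set r := nrm (z - X) in hD sm.
  have am : eta * (D * r) <= eta ^+ 2 / (2 * alpha) * D ^+ 2 + alpha / 2 * r ^+ 2.
    rewrite -subr_ge0.
    have -> : eta ^+ 2 / (2 * alpha) * D ^+ 2 + alpha / 2 * r ^+ 2 - eta * (D * r)
        = (eta * D - alpha * r) ^+ 2 / (2 * alpha).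
      by field; rewrite gt_eqF.
    by rewrite divr_ge0 ?sqr_ge0 // mulr_ge0 // ltW.
  have hD' := ler_wpM2l (ltW eta0) hD.
  rewrite -/(dn nrm _) -/D.
  rewrite opprB dotpBl in hD'.
  rewrite !dotpBr in hD'.
  rewrite opprD !dotpDl !dotpNl !dotpZl (dotpC X g).
  lra.
}
{
  have [dp hc] := SC X Y eta DX DY eta01.
  rewrite addrC !haE // -!EFinM -EFinD -EFinB lee_fin.
  all: lra.
}
{
  case Es: (conj_fun f S) => [Fs| |].
  + have hS : forall u, dotp S u - f u <= Fs.
      move=> u; rewrite -lee_fin EFinB -Es; apply: ereal_sup_ubound; by exists u.
    rewrite cg -?EFinM -?EFinD -?EFinB -?EFinD -?EFinB.
    apply: ge_ereal_sup => _ [z _ <-]; rewrite -EFinB lee_fin.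
    have A1 := conj_lower Hn L0 Hd HL z hS.
    have A2 := conj_lower Hn L0 Hd HL z hg.
    set a := dn nrm (S - gradf z) in A1.
    set b := dn nrm (g - gradf z) in A2.
    have tri : dn nrm (g - S) <= a + b.
      have -> : g - S = (g - gradf z) + (- (S - gradf z)) by rewrite opprB addrA subrK.
      by rewrite addrC; apply: le_trans (dnD Hn _ _) _; rewrite (dnN Hn) lexx.
    rewrite -/(dn nrm _).
    set D := dn nrm (g - S) in tri *.
    have D0 : 0 <= D := dn_ge0 Hn _.
    have a0' : 0 <= a := dn_ge0 Hn _.
    have b0' : 0 <= b := dn_ge0 Hn _.
    have D2 : D ^+ 2 <= (a + b) ^+ 2 by rewrite ler_pXn2r // nnegrE // addr_ge0.
    have k0 : eta * (1 - eta) * (a + b) ^+ 2 <= eta * b ^+ 2 + (1 - eta) * a ^+ 2.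
      rewrite -subr_ge0.
      have -> : eta * b ^+ 2 + (1 - eta) * a ^+ 2 - eta * (1 - eta) * (a + b) ^+ 2
        = ((1 - eta) * a - eta * b) ^+ 2 by ring.
      exact: sqr_ge0.
    have k1 : eta * (1 - eta) * D ^+ 2 <= eta * b ^+ 2 + (1 - eta) * a ^+ 2.
      apply: le_trans k0; apply: ler_wpM2l => //.
      by apply: mulr_ge0; [exact: ltW | rewrite subr_ge0 ltW].
    have L2 : 0 < (2 * L)^-1 by rewrite invr_gt0 mulr_gt0.
    have k2 := ler_wpM2r (ltW L2) k1.
    have e1 : 0 <= 1 - eta by rewrite subr_ge0 ltW.
    have A1' := ler_wpM2l e1 A1.
    have A2' := ler_wpM2l (ltW eta0) A2.
    rewrite dotpDl !dotpZl.
    lra.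
  + by rewrite cg gt0_muley ?lte_fin ?subr_gt0 // addey // addye // leey.
  + have : ((dotp S 0)%:E - (f 0)%:E <= conj_fun f S)%E.
      by apply: ereal_sup_ubound; exists 0.
    by rewrite Es -EFinB leeNy_eq.
}
Qed.
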